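(* Let $R$ and $Q_R$ be as in the context. Then for every $q\in Q_R$ and every $\alpha\in(0,1)$, $$\zeta(q,\alpha)+e^{-i\pi q}\,\zeta(q,1-\alpha)\neq0 .$$
   Context: $\mathbb{H}_\mathbb{R}$ denotes the real quaternions $a+v_1e_1+v_2e_2+v_3e_3$ with $e_1^2=e_2^2=e_3^2=-1$, $e_1e_2=e_3$, $e_2e_3=e_1$, $e_3e_1=e_2$; $\mathbb{H}_\mathbb{C}$ the complex quaternions (complex coefficients, $i$ commuting with every $e_j$). For $q=a+v$, $v=\sum v_je_j$, $|v|=(\sum v_j^2)^{1/2}$. Quaternionic power: for $z\in\mathbb{C}\setminus\{0\}$, $p=b+u\in\mathbb{H}_\mathbb{R}$, $u\ne0$: $z^p:=z^b[\cos(|u|\log z)+\frac{u}{|u|}\sin(|u|\log z)]$ (principal $\log$, $z^b=e^{b\log z}$). Quaternionic Hurwitz zeta: $\zeta(q,a):=\sum_{k\ge0}(a+k)^{-q}$ for $a>0$, $\mathrm{Sc}\,q>1$; classical Hurwitz zeta: $\zeta(s,a)=\sum_{k\ge0}(a+k)^{-s}$. Exponentials $e^{q}:=\sum_j q^j/j!$ in $\mathbb{H}_\mathbb{C}$; for complex $w$, $e^{-i\pi w}$ is the usual complex exponential. Standing assumption: $R\subset\{w\in\mathbb{C}:\mathrm{Re}\,w>1\}$ is a set with $\overline R=R$ such that for every $w\in R$ and every $\alpha\in(0,1)$, $\zeta(w,\alpha)+e^{-i\pi w}\zeta(w,1-\alpha)\neq0$ (such nonempty regions, e.g. small rectangles or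 annular sectors around even integers $2n$, were constructed in earlier work). Define $Q_R:=\{q=a+v\in\mathbb{H}_\mathbb{R}: v\ne0,\ a+i|v|\in R\}$. *)

(* Defs.v *)
From Stdlib Require Import Reals Arith ClassicalEpsilon.
Open Scope R_scope.

Record Cx := mkC { Cre : R; Cim : R }.
Definition C0 : Cx := mkC 0 0.
Definition Cadd (z w : Cx) : Cx := mkC (Cre z + Cre w) (Cim z + Cim w).
Definition Copp (z : Cx) : Cx := mkC (- Cre z) (- Cim z).
Definition Cmul (z w : Cx) : Cx :=
  mkC (Cre z * Cre w - Cim z * Cim w) (Cre z * Cim w + Cim z * Cre w).
Definition Cconj (z : Cx) : Cx := mkC (Cre z) (- Cim z).
Definition Cscal (r : R) (z : Cx) : Cx := mkC (r * Cre z) (r * Cim z).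
Definition Cexp (z : Cx) : Cx := mkC (exp (Cre z) * cos (Cim z)) (exp (Cre z) * sin (Cim z)).
Definition Cpow_pos (x : R) (s : Cx) : Cx := Cexp (Cscal (ln x) s).
Definition C_minus_i_pi : Cx := mkC 0 (- PI).

Definition C_cv (u : nat -> Cx) (l : Cx) : Prop :=
  Un_cv (fun n => Cre (u n)) (Cre l) /\ Un_cv (fun n => Cim (u n)) (Cim l).
Fixpoint Cpartial (f : nat -> Cx) (n : nat) : Cx :=
  match n with
  | O => f O
  | S m => Cadd (Cpartial f m) (f (S m))
  end.
Definition C_series (f : nat -> Cx) : Cx :=
  epsilon (inhabits C0) (fun l => C_cv (Cpartial f) l).

Definition hurwitz (s : Cx) (a : R) : Cx :=
  C_series (fun k => Cpow_pos (a + INR k) (Copp s)).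

Record Hq := mkH { q0 : R; q1 : R; q2 : R; q3 : R }.
Definition H0 : Hq := mkH 0 0 0 0.
Definition Hadd (p q : Hq) : Hq := mkH (q0 p + q0 q) (q1 p + q1 q) (q2 p + q2 q) (q3 p + q3 q).
Definition Hopp (p : Hq) : Hq := mkH (- q0 p) (- q1 p) (- q2 p) (- q3 p).
Definition Hvnorm (p : Hq) : R := sqrt (q1 p ^ 2 + q2 p ^ 2 + q3 p ^ 2).
Definition Hvnonzero (p : Hq) : Prop := ~ (q1 p = 0 /\ q2 p = 0 /\ q3 p = 0).

Definition qpow_pos (x : R) (p : Hq) : Hq :=
  let xb := Rpower x (q0 p) in
  let nu := Hvnorm p in
  let t := nu * ln x in
  mkH (xb * cos t) (xb * (q1 p / nu * sin t))
      (xb * (q2 p / nu * sin t)) (xb * (q3 p / nu * sin t)).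

Definition H_cv (u : nat -> Hq) (l : Hq) : Prop :=
  Un_cv (fun n => q0 (u n)) (q0 l) /\ Un_cv (fun n => q1 (u n)) (q1 l) /\
  Un_cv (fun n => q2 (u n)) (q2 l) /\ Un_cv (fun n => q3 (u n)) (q3 l).
Fixpoint Hpartial (f : nat -> Hq) (n : nat) : Hq :=
  match n with
  | O => f O
  | S m => Hadd (Hpartial f m) (f (S m))
  end.
Definition H_series (f : nat -> Hq) : Hq :=
  epsilon (inhabits H0) (fun l => H_cv (Hpartial f) l).

Definition qzeta (q : Hq) (a : R) : Hq :=
  H_series (fun k => qpow_pos (a + INR k) (Hopp q)).

Record HC := mkHC { c0 : Cx; c1 : Cx; c2 : Cx; c3 : Cx }.
Definition HC0 : HC := mkHC C0 C0 C0 C0.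
Definition HC1 : HC := mkHC (mkC 1 0) C0 C0 C0.
Definition HCadd (p q : HC) : HC :=
  mkHC (Cadd (c0 p) (c0 q)) (Cadd (c1 p) (c1 q)) (Cadd (c2 p) (c2 q)) (Cadd (c3 p) (c3 q)).
Definition Csub (z w : Cx) : Cx := Cadd z (Copp w).
(* Hamilton product: e1^2=e2^2=e3^2=-1, e1e2=e3, e2e3=e1, e3e1=e2; i central *)
Definition HCmul (p q : HC) : HC :=
  mkHC
    (Csub (Csub (Csub (Cmul (c0 p) (c0 q)) (Cmul (c1 p) (c1 q))) (Cmul (c2 p) (c2 q))) (Cmul (c3 p) (c3 q)))
    (Csub (Cadd (Cadd (Cmul (c0 p) (c1 q)) (Cmul (c1 p) (c0 q))) (Cmul (c2 p) (c3 q))) (Cmul (c3 p) (c2 q)))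
    (Cadd (Cadd (Csub (Cmul (c0 p) (c2 q)) (Cmul (c1 p) (c3 q))) (Cmul (c2 p) (c0 q))) (Cmul (c3 p) (c1 q)))
    (Cadd (Csub (Cadd (Cmul (c0 p) (c3 q)) (Cmul (c1 p) (c2 q))) (Cmul (c2 p) (c1 q))) (Cmul (c3 p) (c0 q))).
Definition HCcscal (c : Cx) (p : HC) : HC :=
  mkHC (Cmul c (c0 p)) (Cmul c (c1 p)) (Cmul c (c2 p)) (Cmul c (c3 p)).
Definition HofH (q : Hq) : HC :=
  mkHC (mkC (q0 q) 0) (mkC (q1 q) 0) (mkC (q2 q) 0) (mkC (q3 q) 0).
Fixpoint HCpow (p : HC) (n : nat) : HC :=
  match n with
  | O => HC1
  | S m => HCmul (HCpow p m) p
  end.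

Definition HC_cv (u : nat -> HC) (l : HC) : Prop :=
  C_cv (fun n => c0 (u n)) (c0 l) /\ C_cv (fun n => c1 (u n)) (c1 l) /\
  C_cv (fun n => c2 (u n)) (c2 l) /\ C_cv (fun n => c3 (u n)) (c3 l).
Fixpoint HCpartial (f : nat -> HC) (n : nat) : HC :=
  match n with
  | O => f O
  | S m => HCadd (HCpartial f m) (f (S m))
  end.
Definition HC_series (f : nat -> HC) : HC :=
  epsilon (inhabits HC0) (fun l => HC_cv (HCpartial f) l).

Definition HCexp (X : HC) : HC :=
  HC_series (fun j => HCcscal (mkC (/ INR (Factorial.fact j)) 0) (HCpow X j)).

Definition in_QR (Rset : Cx -> Prop) (q : Hq) : Prop :=
  Hvnonzero q /\ Rset (mkC (q0 q) (Hvnorm q)).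

(* Main.v *)
From Stdlib Require Import Reals Lra Lia ClassicalEpsilon.
From Coquelicot Require Import Coquelicot.
Require Import Defs.
Open Scope R_scope.


Lemma Cx_ext z w : Cre z = Cre w -> Cim z = Cim w -> z = w.
Proof. destruct z, w; simpl; intros; subst; reflexivity. Qed.

Fixpoint Cpowc (z : Cx) (n : nat) : Cx :=
  match n with O => mkC 1 0 | S m => Cmul (Cpowc z m) z end.

Lemma Un_cv_ext u v l : (forall n, u n = v n) -> Un_cv u l -> Un_cv v l.
Proof. intros H Hu e He; destruct (Hu e He) as [N HN]; exists N; intros n Hn; rewrite <- H; auto. Qed.

Lemma Cre_partial f n : Cre (Cpartial f n) = sum_f_R0 (fun k => Cre (f k)) n.
Proof. induction n; simpl; auto. rewrite IHn; auto. Qed.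
Lemma Cim_partial f n : Cim (Cpartial f n) = sum_f_R0 (fun k => Cim (f k)) n.
Proof. induction n; simpl; auto. rewrite IHn; auto. Qed.

Lemma pow_bound z n :
  Rabs (Cre (Cpowc z n)) + Rabs (Cim (Cpowc z n)) <= (Rabs (Cre z) + Rabs (Cim z)) ^ n.
Proof.
  induction n; simpl.
  - rewrite Rabs_R1, Rabs_R0; lra.
  - set (a := Cre (Cpowc z n)) in *; set (b := Cim (Cpowc z n)) in *.
    set (x := Cre z); set (y := Cim z).
    assert (H1 : Rabs (a * x - b * y) <= Rabs a * Rabs x + Rabs b * Rabs y).
    { unfold Rminus. eapply Rle_trans. apply Rabs_triang. rewrite Rabs_Ropp, !Rabs_mult; lra. }
    assert (H2 : Rabs (a * y + b * x) <= Rabs a * Rabs y + Rabs b * Rabs x).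
    { eapply Rle_trans. apply Rabs_triang. rewrite !Rabs_mult; lra. }
    assert (H3 : (Rabs a + Rabs b) * (Rabs x + Rabs y) <= (Rabs x + Rabs y) ^ n * (Rabs x + Rabs y)).
    { apply Rmult_le_compat_r; [ pose proof (Rabs_pos x); pose proof (Rabs_pos y); lra | exact IHn]. }
    lra.
Qed.

Lemma radius_inf a : (forall r, CV_disk a r) -> forall x, Rbar_lt (Rabs x) (CV_radius a).
Proof.
  intros H x. destruct (Lub_Rbar_correct (CV_disk a)) as [ub _].
  specialize (ub (Rabs x + 1) (H _)). unfold CV_radius.
  destruct (Lub_Rbar (CV_disk a)); simpl in *; auto; lra.
Qed.

Definition ar (z : Cx) (n : nat) := Cre (Cpowc z n) / INR (Factorial.fact n).
Definition ai (z : Cx) (n : nat) := Cim (Cpowc z n) / INR (Factorial.fact n).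

Lemma exp_ex_series y : ex_series (fun n => / INR (Factorial.fact n) * y ^ n).
Proof.
  exists (exp y). apply is_pseries_R. apply is_exp_Reals.
Qed.

Lemma disk_gen (c : nat -> R) z :
  (forall n, Rabs (c n) <= (Rabs (Cre z) + Rabs (Cim z)) ^ n) ->
  forall r, CV_disk (fun n => c n / INR (Factorial.fact n)) r.
Proof.
  intros Hc r. unfold CV_disk.
  set (M := Rabs (Cre z) + Rabs (Cim z)).
  apply (@ex_series_le R_AbsRing R_CompleteNormedModule _ (fun n => / INR (Factorial.fact n) * (M * Rabs r) ^ n)).
  2: apply exp_ex_series.
  intros n. change (norm (Rabs (c n / INR (Factorial.fact n) * r ^ n))) with (Rabs (Rabs (c n / INR (Factorial.fact n) * r ^ n))).
  rewrite Rabs_Rabsolu. unfold Rdiv. rewrite !Rabs_mult, Rabs_inv, <- RPow_abs, Rpow_mult_distr.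
  rewrite (Rabs_right (INR (Factorial.fact n))) by (apply Rle_ge, pos_INR).
  assert (0 < / INR (Factorial.fact n)) by (apply Rinv_0_lt_compat, INR_fact_lt_0).
  assert (0 <= Rabs r ^ n) by (apply pow_le, Rabs_pos).
  specialize (Hc n). pose proof (Rabs_pos (c n)).
  replace (/ INR (Factorial.fact n) * (M ^ n * Rabs r ^ n)) with (M ^ n * / INR (Factorial.fact n) * Rabs r ^ n) by ring.
  apply Rmult_le_compat_r; auto. apply Rmult_le_compat_r; [lra | exact Hc].
Qed.

Lemma disk_ar z r : CV_disk (ar z) r.
Proof. apply (disk_gen (fun n => Cre (Cpowc z n)) z). intros n; pose proof (pow_bound z n); pose proof (Rabs_pos (Cim (Cpowc z n))); lra. Qed.
Lemma disk_ai z r : CV_disk (ai z) r.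
Proof. apply (disk_gen (fun n => Cim (Cpowc z n)) z). intros n; pose proof (pow_bound z n); pose proof (Rabs_pos (Cre (Cpowc z n))); lra. Qed.

Lemma scal_R (a b : R) : scal a b = a * b.
Proof. reflexivity. Qed.
Lemma mult_R (a b : R) : mult a b = a * b.
Proof. reflexivity. Qed.
Lemma plus_R (a b : R) : plus a b = a + b.
Proof. reflexivity. Qed.

Lemma deriv_ar z t : is_derive (PSeries (ar z)) t (Cre z * PSeries (ar z) t - Cim z * PSeries (ai z) t).
Proof.
  pose proof (is_derive_PSeries (ar z) t (radius_inf _ (disk_ar z) t)) as H.
  replace (Cre z * PSeries (ar z) t - Cim z * PSeries (ai z) t) with (PSeries (PS_derive (ar z)) t); auto.
  rewrite (PSeries_ext _ (PS_plus (PS_scal (Cre z) (ar z)) (PS_scal (- Cim z) (ai z)))).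
  - rewrite PSeries_plus, !PSeries_scal; [ring | |].
    + apply ex_pseries_scal; [apply Rmult_comm | apply CV_disk_correct, disk_ar]. 
    + apply ex_pseries_scal; [apply Rmult_comm | apply CV_disk_correct, disk_ai].
  - intros n. unfold PS_derive, PS_plus, PS_scal. rewrite plus_R. change (scal (Cre z) (ar z n)) with (Cre z * ar z n). change (scal (- Cim z) (ai z n)) with (- Cim z * ai z n). unfold ar, ai.
    rewrite fact_simpl, mult_INR. simpl Cpowc. simpl Cre. 
    pose proof (INR_fact_neq_0 n). assert (INR (S n) <> 0) by (apply not_0_INR; lia).
    field. auto.
Qed.

Lemma deriv_ai z t : is_derive (PSeries (ai z)) t (Cim z * PSeries (ar z) t + Cre z * PSeries (ai z) t).
Proof.
  pose proof (is_derive_PSeries (ai z) t (radius_inf _ (disk_ai z) t)) as H.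
  replace (Cim z * PSeries (ar z) t + Cre z * PSeries (ai z) t) with (PSeries (PS_derive (ai z)) t); auto.
  rewrite (PSeries_ext _ (PS_plus (PS_scal (Cim z) (ar z)) (PS_scal (Cre z) (ai z)))).
  - rewrite PSeries_plus, !PSeries_scal; [ring | |].
    + apply ex_pseries_scal; [apply Rmult_comm | apply CV_disk_correct, disk_ar].
    + apply ex_pseries_scal; [apply Rmult_comm | apply CV_disk_correct, disk_ai].
  - intros n. unfold PS_derive, PS_plus, PS_scal. rewrite plus_R. change (scal (Cim z) (ar z n)) with (Cim z * ar z n). change (scal (Cre z) (ai z n)) with (Cre z * ai z n). unfold ar, ai.
    rewrite fact_simpl, mult_INR. simpl Cpowc. simpl Cim. 
    pose proof (INR_fact_neq_0 n). assert (INR (S n) <> 0) by (apply not_0_INR; lia).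
    field. auto.
Qed.

Lemma const_fun (F : R -> R) : (forall t, is_derive F t 0) -> F 1 = F 0.
Proof.
  intros HF. destruct (MVT_gen F 0 1 (fun _ => 0)) as [c [_ Hc]].
  - intros; apply HF.
  - intros t _. apply continuity_pt_filterlim. apply (@ex_derive_continuous R_AbsRing R_NormedModule). eexists; apply HF.
  - lra.
Qed.

Lemma exp_parts z : PSeries (ar z) 1 = exp (Cre z) * cos (Cim z) /\ PSeries (ai z) 1 = exp (Cre z) * sin (Cim z).
Proof.
  set (x := Cre z); set (y := Cim z); set (f := PSeries (ar z)); set (g := PSeries (ai z)).
  assert (Df : forall t, is_derive f t (x * f t - y * g t)) by (intros; apply deriv_ar).
  assert (Dg : forall t, is_derive g t (y * f t + x * g t)) by (intros; apply deriv_ai).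
  assert (f0 : f 0 = 1).
  { unfold f; rewrite PSeries_0; unfold ar; simpl; field. }
  assert (g0 : g 0 = 0).
  { unfold g; rewrite PSeries_0; unfold ai; simpl; field. }
  assert (HF : forall t, is_derive (fun t => exp (-(t*x)) * (f t * cos (t*y) + g t * sin (t*y))) t 0).
  { intros t. auto_derive.
    - split; [eexists; apply Df | split; [eexists; apply Dg | auto]].
    - replace (Derive (fun x0 => f x0) t) with (x * f t - y * g t) by (symmetry; apply is_derive_unique; apply Df).
      replace (Derive (fun x0 => g x0) t) with (y * f t + x * g t) by (symmetry; apply is_derive_unique; apply Dg). ring. }
  assert (HG : forall t, is_derive (fun t => exp (-(t*x)) * (g t * cos (t*y) - f t * sin (t*y))) t 0).
  { intros t. auto_derive.
    - split; [eexists; apply Dg | split; [eexists; apply Df | auto]].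
    - replace (Derive (fun x0 => f x0) t) with (x * f t - y * g t) by (symmetry; apply is_derive_unique; apply Df).
      replace (Derive (fun x0 => g x0) t) with (y * f t + x * g t) by (symmetry; apply is_derive_unique; apply Dg). ring. }
  pose proof (const_fun _ HF) as E1. pose proof (const_fun _ HG) as E2.
  simpl in E1, E2. rewrite f0, g0 in E1, E2.
  replace (0 * x) with 0 in E1, E2 by ring. replace (0 * y) with 0 in E1, E2 by ring.
  replace (1 * x) with x in E1, E2 by ring. replace (1 * y) with y in E1, E2 by ring.
  rewrite Ropp_0, exp_0, cos_0, sin_0 in E1, E2.
  pose proof (sin2_cos2 y). unfold Rsqr in H.
  assert (Ex : exp x * exp (- x) = 1) by (rewrite <- exp_plus; replace (x + - x) with 0 by ring; apply exp_0).
  set (ex := exp (-x)) in *. set (c := cos y) in *. set (s := sin y) in *.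
  split.
  - transitivity (exp x * (c * (ex * (f 1 * c + g 1 * s)) - s * (ex * (g 1 * c - f 1 * s)))).
    + transitivity (f 1 * (exp x * ex) * (s * s + c * c)); [rewrite Ex, H; ring | ring].
    + rewrite E1, E2; ring.
  - transitivity (exp x * (s * (ex * (f 1 * c + g 1 * s)) + c * (ex * (g 1 * c - f 1 * s)))).
    + transitivity (g 1 * (exp x * ex) * (s * s + c * c)); [rewrite Ex, H; ring | ring].
    + rewrite E1, E2; ring.
Qed.

Definition expterm (z : Cx) (j : nat) : Cx := Cscal (/ INR (Factorial.fact j)) (Cpowc z j).

Lemma series_Un_cv (a : nat -> R) l : is_series a l -> Un_cv (sum_f_R0 a) l.
Proof. intros H. apply is_series_Reals in H. exact H. Qed.

Lemma Cexp_series z : C_cv (Cpartial (expterm z)) (Cexp z).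
Proof.
  destruct (exp_parts z) as [E1 E2]. split; simpl.
  - rewrite <- E1.
    apply (Un_cv_ext (sum_f_R0 (fun n => ar z n * 1 ^ n))).
    { intros n. rewrite Cre_partial. apply sum_eq. intros i _. unfold ar, expterm; simpl. rewrite pow1. field. apply INR_fact_neq_0. }
    apply series_Un_cv, is_pseries_R, PSeries_correct, CV_disk_correct, disk_ar.
  - rewrite <- E2.
    apply (Un_cv_ext (sum_f_R0 (fun n => ai z n * 1 ^ n))).
    { intros n. rewrite Cim_partial. apply sum_eq. intros i _. unfold ai, expterm; simpl. rewrite pow1. field. apply INR_fact_neq_0. }
    apply series_Un_cv, is_pseries_R, PSeries_correct, CV_disk_correct, disk_ai.
Qed.

Lemma mvt_step a b : 1 < a -> 1 < b ->
  Rpower b (- a) <= (Rpower (b - 1) (1 - a) - Rpower b (1 - a)) / (a - 1).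
Proof.
  intros Ha Hb.
  destruct (MVT_cor2 (fun t => Rpower t (1 - a)) (fun t => (1 - a) * Rpower t (1 - a - 1)) (b - 1) b)
    as [c [Hc Hcb]].
  - lra.
  - intros c Hc. apply derivable_pt_lim_power. lra.
  - replace (1 - a - 1) with (- a) in Hc by ring.
    assert (Rpower b (- a) <= Rpower c (- a)).
    { unfold Rpower. apply Rlt_le, exp_increasing.
      assert (ln c < ln b) by (apply ln_increasing; lra). nra. }
    apply (Rmult_le_reg_r (a - 1)); [lra|].
    unfold Rdiv. rewrite Rmult_assoc, Rinv_l, Rmult_1_r by lra.
    replace (Rpower (b - 1) (1 - a) - Rpower b (1 - a)) with (- (Rpower b (1 - a) - Rpower (b - 1) (1 - a))) by ring.
    rewrite Hc. replace (b - (b - 1)) with 1 by ring. nra.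
Qed.

Lemma pseries_conv a alpha : 1 < a -> 0 < alpha -> ex_series (fun k => Rpower (alpha + INR k) (- a)).
Proof.
  intros Ha Hal.
  set (e := fun k => Rpower (alpha + INR k) (- a)).
  set (h := fun t => Rpower t (1 - a)).
  assert (He : forall k, 0 < e k) by (intros; unfold e, Rpower; apply exp_pos).
  assert (Hh : forall t, 0 < h t) by (intros; unfold h, Rpower; apply exp_pos).
  assert (Hb : forall n, sum_f_R0 e n <= e 0%nat + (h alpha - h (alpha + INR n)) / (a - 1)).
  { induction n.
    - simpl. replace (alpha + 0) with alpha by ring. unfold Rdiv. rewrite Rminus_diag, Rmult_0_l. lra.
    - simpl sum_f_R0. 
      assert (e (S n) <= (h (alpha + INR n) - h (alpha + INR (S n))) / (a - 1)).
      { unfold e, h. rewrite S_INR. replace (alpha + INR n) with (alpha + (INR n + 1) - 1) at 1 by ring.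
        apply mvt_step; auto. pose proof (pos_INR n). lra. }
      assert ((h alpha - h (alpha + INR n)) / (a - 1) + (h (alpha + INR n) - h (alpha + INR (S n))) / (a - 1)
              = (h alpha - h (alpha + INR (S n))) / (a - 1)) by (field; lra).
      lra. }
  destruct (growing_cv (sum_f_R0 e)) as [l Hl].
  - intros n. simpl. pose proof (He (S n)). lra.
  - exists (e 0%nat + h alpha / (a - 1)). intros x [i ->].
    pose proof (Hb i). pose proof (Hh (alpha + INR i)).
    assert (0 < / (a - 1)) by (apply Rinv_0_lt_compat; lra).
    unfold Rdiv in *. nra.
  - exists l. apply is_series_Reals. exact Hl.
Qed.

Lemma C_series_eq f l : C_cv (Cpartial f) l -> C_series f = l.
Proof.
  intros H. unfold C_series.
  pose proof (epsilon_spec (inhabits C0) (fun l => C_cv (Cpartial f) l) (ex_intro _ l H)) as H'.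
  destruct H as [H1 H2], H' as [H1' H2'].
  apply Cx_ext; eapply UL_sequence; eauto.
Qed.

Lemma hurwitz_cv s alpha : 1 < Cre s -> 0 < alpha ->
  C_cv (Cpartial (fun k => Cpow_pos (alpha + INR k) (Copp s))) (hurwitz s alpha).
Proof.
  intros Hs Ha.
  pose proof (pseries_conv _ _ Hs Ha) as Hc.
  set (t := fun k => Cpow_pos (alpha + INR k) (Copp s)).
  assert (Ht : forall k, Rabs (Cre (t k)) <= Rpower (alpha + INR k) (- Cre s) /\
                         Rabs (Cim (t k)) <= Rpower (alpha + INR k) (- Cre s)).
  { intros k. unfold t, Cpow_pos, Cexp, Cscal, Rpower; simpl.
    rewrite !Rabs_mult, (Rabs_right (exp _)) by (apply Rle_ge, Rlt_le, exp_pos).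
    rewrite (Rmult_comm (- Cre s)).
    pose proof (exp_pos (ln (alpha + INR k) * - Cre s)).
    assert (Rabs (cos (ln (alpha + INR k) * - Cim s)) <= 1) by (apply Rabs_le, COS_bound).
    assert (Rabs (sin (ln (alpha + INR k) * - Cim s)) <= 1) by (apply Rabs_le, SIN_bound).
    split; nra. }
  assert (Er : ex_series (fun k => Cre (t k))).
  { refine (@ex_series_le R_AbsRing R_CompleteNormedModule _ _ _ Hc). intros n; apply Ht. }
  assert (Ei : ex_series (fun k => Cim (t k))).
  { refine (@ex_series_le R_AbsRing R_CompleteNormedModule _ _ _ Hc). intros n; apply Ht. }
  assert (HC : C_cv (Cpartial t) (mkC (Series (fun k => Cre (t k))) (Series (fun k => Cim (t k))))).
  { split; simpl.
    - apply (Un_cv_ext (sum_f_R0 (fun k => Cre (t k)))). { intros; rewrite Cre_partial; auto. }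
      apply series_Un_cv, Series_correct, Er.
    - apply (Un_cv_ext (sum_f_R0 (fun k => Cim (t k)))). { intros; rewrite Cim_partial; auto. }
      apply series_Un_cv, Series_correct, Ei. }
  unfold hurwitz. fold t. rewrite (C_series_eq _ _ HC). exact HC.
Qed.

Ltac cx := apply Cx_ext; simpl; ring.

Definition slice (u1 u2 u3 : R) (A B : Cx) : HC := mkHC A (Cscal u1 B) (Cscal u2 B) (Cscal u3 B).

Lemma slice_add u1 u2 u3 A B A' B' :
  HCadd (slice u1 u2 u3 A B) (slice u1 u2 u3 A' B') = slice u1 u2 u3 (Cadd A A') (Cadd B B').
Proof. unfold slice, HCadd; simpl. f_equal; cx. Qed.

Lemma slice_cscal u1 u2 u3 c A B :
  HCcscal c (slice u1 u2 u3 A B) = slice u1 u2 u3 (Cmul c A) (Cmul c B).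
Proof. unfold slice, HCcscal; simpl. f_equal; cx. Qed.

Lemma slice_mul u1 u2 u3 A B A' B' : u1 * u1 + u2 * u2 + u3 * u3 = 1 ->
  HCmul (slice u1 u2 u3 A B) (slice u1 u2 u3 A' B') =
  slice u1 u2 u3 (Cadd (Cmul A A') (Copp (Cmul B B'))) (Cadd (Cmul A B') (Cmul B A')).
Proof.
  intros Hu. unfold slice, HCmul, Csub; simpl. f_equal; try cx.
  transitivity (Cadd (Cmul A A') (Copp (Cscal (u1 * u1 + u2 * u2 + u3 * u3) (Cmul B B')))).
  - cx.
  - rewrite Hu. cx.
Qed.

Lemma slice_zero u1 u2 u3 A B : ~ (u1 = 0 /\ u2 = 0 /\ u3 = 0) ->
  slice u1 u2 u3 A B = HC0 -> A = C0 /\ B = C0.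
Proof.
  intros Hn H. unfold slice, HC0 in H.
  pose proof (f_equal c0 H) as HA. pose proof (f_equal c1 H) as H1.
  pose proof (f_equal c2 H) as H2. pose proof (f_equal c3 H) as H3. simpl in *. split; auto.
  destruct B as [b1 b2]. unfold Cscal, C0 in *; simpl in *.
  pose proof (f_equal Cre H1) as H1a. pose proof (f_equal Cim H1) as H1b.
  pose proof (f_equal Cre H2) as H2a. pose proof (f_equal Cim H2) as H2b.
  pose proof (f_equal Cre H3) as H3a. pose proof (f_equal Cim H3) as H3b. simpl in *.
  assert (b1 = 0 /\ b2 = 0).
  { destruct (Req_dec u1 0) as [E1|E1]; [destruct (Req_dec u2 0) as [E2|E2]; [destruct (Req_dec u3 0) as [E3|E3]|]|].
    - exfalso; auto.
    - split; apply (Rmult_eq_reg_l u3); lra.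
    - split; apply (Rmult_eq_reg_l u2); lra.
    - split; apply (Rmult_eq_reg_l u1); lra. }
  destruct H0 as [-> ->]; auto.
Qed.

Definition hh := mkC (/2) 0.
Definition k1 := mkC 0 (-/2).
Definition k2 := mkC 0 (/2).
Definition Ic := mkC 0 1.
Definition Lp A B := Cadd A (Cmul Ic B).
Definition Lm A B := Cadd A (Copp (Cmul Ic B)).
Definition AJ zp zm (j : nat) := Cadd (Cmul hh (Cpowc zp j)) (Cmul hh (Cpowc zm j)).
Definition BJ zp zm (j : nat) := Cadd (Cmul k1 (Cpowc zp j)) (Cmul k2 (Cpowc zm j)).

Ltac cxf := apply Cx_ext; simpl; field.

Lemma HCpow_slice u1 u2 u3 XA XB j : u1 * u1 + u2 * u2 + u3 * u3 = 1 ->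
  HCpow (slice u1 u2 u3 XA XB) j = slice u1 u2 u3 (AJ (Lp XA XB) (Lm XA XB) j) (BJ (Lp XA XB) (Lm XA XB) j).
Proof.
  intros Hu. induction j.
  - unfold slice, AJ, BJ, hh, k1, k2; simpl. unfold HC1, C0. f_equal; cxf.
  - simpl HCpow. rewrite IHj, slice_mul by exact Hu. unfold slice, AJ, BJ, Lp, Lm, hh, k1, k2, Ic.
    simpl Cpowc. f_equal; cxf.
Qed.

Lemma Un_cv_const c : Un_cv (fun _ => c) c.
Proof. intros e He; exists 0%nat; intros; unfold R_dist; rewrite Rminus_diag, Rabs_R0; auto. Qed.

Lemma Un_cv_lin a b f g l m : Un_cv f l -> Un_cv g m -> Un_cv (fun n => a * f n + b * g n) (a * l + b * m).
Proof.
  intros Hf Hg. apply CV_plus; apply CV_mult; auto; apply Un_cv_const.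
Qed.

Lemma C_cv_ext f g l : (forall n, f n = g n) -> C_cv f l -> C_cv g l.
Proof. intros H [H1 H2]; split; eapply Un_cv_ext; eauto; intros; simpl; rewrite H; auto. Qed.

Lemma C_cv_lin c d f g l m : C_cv f l -> C_cv g m ->
  C_cv (fun n => Cadd (Cmul c (f n)) (Cmul d (g n))) (Cadd (Cmul c l) (Cmul d m)).
Proof.
  intros [F1 F2] [G1 G2]. split; simpl.
  - pose proof (CV_plus _ _ _ _ (Un_cv_lin (Cre c) (- Cim c) _ _ _ _ F1 F2) (Un_cv_lin (Cre d) (- Cim d) _ _ _ _ G1 G2)) as H.
    eapply Un_cv_ext; [| replace (Cre c * Cre l - Cim c * Cim l + (Cre d * Cre m - Cim d * Cim m)) with
      (Cre c * Cre l + - Cim c * Cim l + (Cre d * Cre m + - Cim d * Cim m)) by ring; exact H].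
    intros n; simpl; ring.
  - pose proof (CV_plus _ _ _ _ (Un_cv_lin (Cre c) (Cim c) _ _ _ _ F2 F1) (Un_cv_lin (Cre d) (Cim d) _ _ _ _ G2 G1)) as H.
    eapply Un_cv_ext; [| replace (Cre c * Cim l + Cim c * Cre l + (Cre d * Cim m + Cim d * Cre m)) with
      (Cre c * Cim l + Cim c * Cre l + (Cre d * Cim m + Cim d * Cre m)) by ring; exact H].
    intros n; simpl; ring.
Qed.

Lemma C_cv_scal r f l : C_cv f l -> C_cv (fun n => Cscal r (f n)) (Cscal r l).
Proof.
  intros [F1 F2]; split; simpl; apply CV_mult; auto; apply Un_cv_const.
Qed.

Lemma C_cv_unique f l m : C_cv f l -> C_cv f m -> l = m.
Proof. intros [F1 F2] [G1 G2]; apply Cx_ext; eapply UL_sequence; eauto. Qed.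

Lemma Cpartial_lin c d f g n :
  Cpartial (fun j => Cadd (Cmul c (f j)) (Cmul d (g j))) n = Cadd (Cmul c (Cpartial f n)) (Cmul d (Cpartial g n)).
Proof. induction n; simpl; auto. rewrite IHn. apply Cx_ext; simpl; ring. Qed.

Lemma HCpartial_slice u1 u2 u3 f a b n : (forall j, f j = slice u1 u2 u3 (a j) (b j)) ->
  HCpartial f n = slice u1 u2 u3 (Cpartial a n) (Cpartial b n).
Proof. intros H; induction n; simpl; rewrite H; auto. rewrite IHn, slice_add; auto. Qed.

Lemma HC_series_eq f l : HC_cv (HCpartial f) l -> HC_series f = l.
Proof.
  intros H. unfold HC_series.
  pose proof (epsilon_spec (inhabits HC0) (fun l => HC_cv (HCpartial f) l) (ex_intro _ l H)) as H'.
  destruct H as [A [B [C D]]], H' as [A' [B' [C' D']]].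
  destruct l; simpl in *; destruct (epsilon _ _); simpl in *; f_equal; eapply C_cv_unique; eauto.
Qed.

Lemma HCexp_slice u1 u2 u3 XA XB : u1 * u1 + u2 * u2 + u3 * u3 = 1 ->
  HCexp (slice u1 u2 u3 XA XB) =
  slice u1 u2 u3 (Cadd (Cmul hh (Cexp (Lp XA XB))) (Cmul hh (Cexp (Lm XA XB))))
                 (Cadd (Cmul k1 (Cexp (Lp XA XB))) (Cmul k2 (Cexp (Lm XA XB)))).
Proof.
  intros Hu. set (zp := Lp XA XB); set (zm := Lm XA XB).
  apply HC_series_eq.
  set (a := fun j => Cadd (Cmul hh (expterm zp j)) (Cmul hh (expterm zm j))).
  set (b := fun j => Cadd (Cmul k1 (expterm zp j)) (Cmul k2 (expterm zm j))).
  assert (HP : forall n, HCpartial (fun j => HCcscal (mkC (/ INR (Factorial.fact j)) 0) (HCpow (slice u1 u2 u3 XA XB) j)) n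
             = slice u1 u2 u3 (Cpartial a n) (Cpartial b n)).
  { intros n; apply HCpartial_slice. intros j. rewrite HCpow_slice, slice_cscal by exact Hu.
    unfold a, b, AJ, BJ, expterm. fold zp zm. f_equal; apply Cx_ext; simpl; ring. }
  assert (Ha : C_cv (Cpartial a) (Cadd (Cmul hh (Cexp zp)) (Cmul hh (Cexp zm)))).
  { eapply C_cv_ext. 2: apply C_cv_lin; apply Cexp_series. intros n; unfold a; rewrite Cpartial_lin; auto. }
  assert (Hb : C_cv (Cpartial b) (Cadd (Cmul k1 (Cexp zp)) (Cmul k2 (Cexp zm)))).
  { eapply C_cv_ext. 2: apply C_cv_lin; apply Cexp_series. intros n; unfold b; rewrite Cpartial_lin; auto. }
  unfold HC_cv; simpl. repeat split; (eapply C_cv_ext; [intros n; rewrite HP; reflexivity|]); simpl;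
    try apply C_cv_scal; auto.
Qed.

Lemma H_series_eq f l : H_cv (Hpartial f) l -> H_series f = l.
Proof.
  intros H. unfold H_series.
  pose proof (epsilon_spec (inhabits H0) (fun l => H_cv (Hpartial f) l) (ex_intro _ l H)) as H'.
  destruct H as [A [B [C D]]], H' as [A' [B' [C' D']]].
  destruct l; simpl in *; destruct (epsilon _ _); simpl in *; f_equal; eapply UL_sequence; eauto.
Qed.

Lemma Hp0 f t n : (forall k, q0 (f k) = Cre (t k)) -> q0 (Hpartial f n) = Cre (Cpartial t n).
Proof. intros H; induction n; simpl; rewrite ?IHn, H; auto. Qed.
Lemma Hp1 f t c n : (forall k, q1 (f k) = c * Cim (t k)) -> q1 (Hpartial f n) = c * Cim (Cpartial t n).
Proof. intros H; induction n; simpl; rewrite ?IHn, H; auto; ring. Qed.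
Lemma Hp2 f t c n : (forall k, q2 (f k) = c * Cim (t k)) -> q2 (Hpartial f n) = c * Cim (Cpartial t n).
Proof. intros H; induction n; simpl; rewrite ?IHn, H; auto; ring. Qed.
Lemma Hp3 f t c n : (forall k, q3 (f k) = c * Cim (t k)) -> q3 (Hpartial f n) = c * Cim (Cpartial t n).
Proof. intros H; induction n; simpl; rewrite ?IHn, H; auto; ring. Qed.

Lemma Hvnorm_opp q : Hvnorm (Hopp q) = Hvnorm q.
Proof. unfold Hvnorm; simpl; f_equal; ring. Qed.

Lemma qzeta_eq q alpha : 1 < q0 q -> 0 < alpha ->
  qzeta q alpha =
  mkH (Cre (hurwitz (mkC (q0 q) (Hvnorm q)) alpha))
      (q1 q / Hvnorm q * Cim (hurwitz (mkC (q0 q) (Hvnorm q)) alpha))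
      (q2 q / Hvnorm q * Cim (hurwitz (mkC (q0 q) (Hvnorm q)) alpha))
      (q3 q / Hvnorm q * Cim (hurwitz (mkC (q0 q) (Hvnorm q)) alpha)).
Proof.
  intros Hq Ha. set (s := mkC (q0 q) (Hvnorm q)).
  assert (Hs : 1 < Cre s) by (simpl; auto).
  pose proof (hurwitz_cv s alpha Hs Ha) as [HC1 HC2].
  set (t := fun k => Cpow_pos (alpha + INR k) (Copp s)) in *.
  set (f := fun k => qpow_pos (alpha + INR k) (Hopp q)).
  assert (T : forall k, q0 (f k) = Cre (t k) /\
     forall c, c = q1 q \/ c = q2 q \/ c = q3 q ->
       (- c) / Hvnorm q * (Rpower (alpha + INR k) (- q0 q) * sin (Hvnorm q * ln (alpha + INR k)))
       = c / Hvnorm q * Cim (t k)).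
  { intros k. unfold f, t, qpow_pos, Cpow_pos, Cexp, Cscal, Rpower, s; simpl. rewrite Hvnorm_opp.
    replace (ln (alpha + INR k) * - Hvnorm q) with (- (Hvnorm q * ln (alpha + INR k))) by ring.
    rewrite cos_neg, sin_neg, (Rmult_comm (ln _) (- q0 q)). split; [reflexivity | intros; unfold Rdiv; ring]. }
  unfold qzeta. fold f. apply H_series_eq. unfold H_cv; simpl.
  split; [| split; [| split]].
  - eapply Un_cv_ext; [| exact HC1]. intros n; symmetry; apply Hp0. intros; apply T.
  - apply (Un_cv_ext (fun n => q1 q / Hvnorm q * Cim (Cpartial t n))).
    { intros n; symmetry; apply Hp1. intros k. unfold f, qpow_pos; simpl. rewrite <- (proj2 (T k)) by auto. unfold f, qpow_pos. rewrite Hvnorm_opp. simpl; ring. }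
    apply CV_mult; [apply Un_cv_const | exact HC2].
  - apply (Un_cv_ext (fun n => q2 q / Hvnorm q * Cim (Cpartial t n))).
    { intros n; symmetry; apply Hp2. intros k. unfold f, qpow_pos; simpl. rewrite <- (proj2 (T k)) by auto. unfold f, qpow_pos. rewrite Hvnorm_opp. simpl; ring. }
    apply CV_mult; [apply Un_cv_const | exact HC2].
  - apply (Un_cv_ext (fun n => q3 q / Hvnorm q * Cim (Cpartial t n))).
    { intros n; symmetry; apply Hp3. intros k. unfold f, qpow_pos; simpl. rewrite <- (proj2 (T k)) by auto. unfold f, qpow_pos. rewrite Hvnorm_opp. simpl; ring. }
    apply CV_mult; [apply Un_cv_const | exact HC2].
Qed.

Lemma final_alg z1 z2 E E' :
  Cadd z1 (Cmul E z2) =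
  Cadd (Cadd (mkC (Cre z1) 0) (Cadd (Cmul (Cadd (Cmul hh E) (Cmul hh E')) (mkC (Cre z2) 0))
                                    (Copp (Cmul (Cadd (Cmul k1 E) (Cmul k2 E')) (mkC (Cim z2) 0)))))
       (Cmul Ic (Cadd (mkC (Cim z1) 0) (Cadd (Cmul (Cadd (Cmul hh E) (Cmul hh E')) (mkC (Cim z2) 0))
                                             (Cmul (Cadd (Cmul k1 E) (Cmul k2 E')) (mkC (Cre z2) 0))))).
Proof. unfold hh, k1, k2, Ic. apply Cx_ext; simpl; field. Qed.

Theorem proposition3 (Rset : Cx -> Prop)
  (HRre : forall w, Rset w -> 1 < Cre w)
  (HRconj : forall w, Rset w <-> Rset (Cconj w))
  (HRnz : forall w alpha, Rset w -> 0 < alpha < 1 ->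
     Cadd (hurwitz w alpha)
          (Cmul (Cexp (Cmul C_minus_i_pi w)) (hurwitz w (1 - alpha))) <> C0) :
  forall (q : Hq), in_QR Rset q -> forall alpha, 0 < alpha < 1 ->
    HCadd (HofH (qzeta q alpha))
          (HCmul (HCexp (HCcscal C_minus_i_pi (HofH q))) (HofH (qzeta q (1 - alpha))))
    <> HC0.
Proof.
  intros q [Hnz HR] alpha Hal.
  set (nu := Hvnorm q) in *. set (w := mkC (q0 q) nu) in *.
  pose proof (HRre _ HR) as Hq. simpl in Hq.
  assert (Hpos : 0 < q1 q ^ 2 + q2 q ^ 2 + q3 q ^ 2).
  { destruct (Req_dec (q1 q) 0) as [E1|E1]; [destruct (Req_dec (q2 q) 0) as [E2|E2]; [destruct (Req_dec (q3 q) 0) as [E3|E3]|]|].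
    - exfalso; auto.
    - destruct (Rdichotomy _ _ E3); nra.
    - destruct (Rdichotomy _ _ E2); nra.
    - destruct (Rdichotomy _ _ E1); nra. }
  assert (Hnu : 0 < nu) by (apply sqrt_lt_R0; exact Hpos).
  assert (Hnu2 : nu * nu = q1 q ^ 2 + q2 q ^ 2 + q3 q ^ 2) by (apply sqrt_sqrt; lra).
  set (u1 := q1 q / nu). set (u2 := q2 q / nu). set (u3 := q3 q / nu).
  assert (Hu : u1 * u1 + u2 * u2 + u3 * u3 = 1).
  { unfold u1, u2, u3. field_simplify; [| lra]. rewrite <- Hnu2. field. lra. }
  assert (Hun : ~ (u1 = 0 /\ u2 = 0 /\ u3 = 0)).
  { intros [U1 [U2 U3]]. apply Hnz. unfold u1, u2, u3 in *.
    split; [|split]; [apply (Rmult_eq_reg_r (/ nu)) | apply (Rmult_eq_reg_r (/ nu)) | apply (Rmult_eq_reg_r (/ nu))];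
      try (apply Rinv_neq_0_compat; lra); rewrite Rmult_0_l; assumption. }
  assert (Hz : forall a, 0 < a < 1 -> HofH (qzeta q a) =
            slice u1 u2 u3 (mkC (Cre (hurwitz w a)) 0) (mkC (Cim (hurwitz w a)) 0)).
  { intros a Ha. rewrite qzeta_eq by (auto; lra). unfold HofH, slice; simpl. fold nu w.
    f_equal; apply Cx_ext; simpl; unfold u1, u2, u3; ring. }
  assert (HX : HCcscal C_minus_i_pi (HofH q) =
     slice u1 u2 u3 (Cmul C_minus_i_pi (mkC (q0 q) 0)) (Cmul C_minus_i_pi (mkC nu 0))).
  { unfold HCcscal, HofH, slice, C_minus_i_pi; simpl. unfold u1, u2, u3.
    f_equal; apply Cx_ext; simpl; field; lra. }
  assert (HL : Lp (Cmul C_minus_i_pi (mkC (q0 q) 0)) (Cmul C_minus_i_pi (mkC nu 0)) = Cmul C_minus_i_pi w).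
  { unfold Lp, Ic, C_minus_i_pi, w. apply Cx_ext; simpl; ring. }
  rewrite (Hz alpha) by lra. rewrite (Hz (1 - alpha)) by lra. rewrite HX, HCexp_slice, HL, slice_mul, slice_add by exact Hu.
  intros E. apply slice_zero in E as [EA EB]; [| exact Hun].
  apply (HRnz w alpha HR Hal).
  rewrite (final_alg (hurwitz w alpha) (hurwitz w (1 - alpha)) (Cexp (Cmul C_minus_i_pi w))
             (Cexp (Lm (Cmul C_minus_i_pi (mkC (q0 q) 0)) (Cmul C_minus_i_pi (mkC nu 0))))).
  rewrite EA, EB. apply Cx_ext; simpl; ring.
Qed.
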